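(* Let $C\ge2$, $\boldsymbol{M}^\star=\sqrt{\frac{C}{C-1}}\left(\boldsymbol{I}-\frac1C\mathbf{1}\mathbf{1}^\top\right)\in\mathbb{R}^{C\times C}$ with columns $\boldsymbol{\mu}^\star_1,\dots,\boldsymbol{\mu}^\star_C$. For $c\ne c'$ let $\mathcal{K}_{c,c'}=\{\boldsymbol{z}\in\mathbb{R}^C:\ (\boldsymbol{M}^\star(\boldsymbol{\mu}^\star_c+\boldsymbol{z}))(c')\ge(\boldsymbol{M}^\star(\boldsymbol{\mu}^\star_c+\boldsymbol{z}))(c)\}$, where $\boldsymbol{v}(k)$ denotes the $k$-th coordinate of $\boldsymbol{v}$, and let $\boldsymbol{z}^\star_{c,c'}$ be a minimizer of $\frac12\|\boldsymbol{z}\|_2^2$ over $\boldsymbol{z}\in\mathcal{K}_{c,c'}$. Then for all $c\ne c'$, $$\|\boldsymbol{z}^\star_{c,c'}\|_2=\frac12\|\boldsymbol{\mu}^\star_c-\boldsymbol{\mu}^\star_{c'}\|_2.$$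
   Context: $\mathbf{1}$ denotes the all-ones vector in $\mathbb{R}^C$. The set $\mathcal{K}_{c,c'}$ is the set of noise vectors $\boldsymbol{z}$ for which the linear classifier with weight matrix $\boldsymbol{M}^\star$ and zero bias scores class $c'$ at least as high as class $c$ on the input $\boldsymbol{\mu}^\star_c+\boldsymbol{z}$. *)

(* Defs.v *)
From mathcomp Require Import all_boot all_order all_algebra.
Set Implicit Arguments. Unset Strict Implicit. Unset Printing Implicit Defensive.
Import Order.TTheory GRing.Theory Num.Theory.
Local Open Scope ring_scope.

Definition Mstar (R : rcfType) (C : nat) : 'M[R]_C :=
  Num.sqrt (C%:R / (C%:R - 1)) *: (1%:M - C%:R^-1 *: const_mx 1).

Definition mustar (R : rcfType) (C : nat) (c : 'I_C) : 'cV[R]_C :=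
  col c (Mstar R C).

Definition norm2 (R : rcfType) (C : nat) (v : 'cV[R]_C) : R :=
  Num.sqrt (\sum_(i < C) (v i 0) ^+ 2).

Definition Kcc (R : rcfType) (C : nat) (c c' : 'I_C) (z : 'cV[R]_C) : Prop :=
  (Mstar R C *m (mustar R c + z)) c 0 <= (Mstar R C *m (mustar R c + z)) c' 0.

(* Main.v *)
Require Import Defs.
From mathcomp Require Import all_boot all_order all_algebra.
Import Order.TTheory GRing.Theory Num.Theory.
Local Open Scope ring_scope.
From mathcomp Require Import ring lra.

Section S.
Variables (R : rcfType) (C : nat).
Let s := Num.sqrt (C%:R / (C%:R - 1) : R).

Lemma MstarE i j : Mstar R C i j = s * ((i == j)%:R - C%:R^-1).
Proof. by rewrite /Mstar !mxE mulr1. Qed.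

Lemma sum_ind (c : 'I_C) (F : 'I_C -> R) : \sum_j (c == j)%:R * F j = F c.
Proof.
rewrite (bigD1 c) //= eqxx mul1r big1 ?addr0 // => j.
by rewrite eq_sym => /negbTE ->; rewrite mul0r.
Qed.

Lemma Mdiff (c c' : 'I_C) (v : 'cV[R]_C) :
  (Mstar R C *m v) c' 0 - (Mstar R C *m v) c 0 = s * (v c' 0 - v c 0).
Proof.
rewrite !mxE -sumrB.
rewrite (eq_bigr (fun j => s * ((c' == j)%:R * v j 0) - s * ((c == j)%:R * v j 0))); last first.
  by move=> j _; rewrite !MstarE; ring.
by rewrite sumrB -!mulr_sumr !sum_ind mulrBr.
Qed.

Lemma split2 (c c' : 'I_C) (F : 'I_C -> R) : c != c' ->
  \sum_i F i = F c + F c' + \sum_(i | (i != c) && (i != c')) F i.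
Proof.
move=> h; rewrite (bigD1 c) // (bigD1 c') /= ?addrA //.
by rewrite eq_sym.
Qed.

Lemma norm2E (v : 'cV[R]_C) : norm2 v ^+ 2 = \sum_i (v i 0) ^+ 2.
Proof. by rewrite /norm2 sqr_sqrtr // sumr_ge0 // => i _; rewrite sqr_ge0. Qed.

Lemma KccE (c c' : 'I_C) (w : 'cV[R]_C) : c != c' -> 0 < s ->
  Kcc c c' w <-> s <= w c' 0 - w c 0.
Proof.
move=> hcc hs; rewrite /Kcc -subr_ge0 Mdiff /mustar !mxE -/s eqxx eq_sym (negbTE hcc) !mulr1 /=.
rewrite (_ : s * _ = s * ((w c' 0 - w c 0) - s)); last by ring.
by rewrite pmulr_rge0 // subr_ge0.
Qed.
End S.

Theorem lemma12 (R : rcfType) (C : nat) (hC : (2 <= C)%N)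
  (c c' : 'I_C) (hcc : c != c') (z : 'cV[R]_C)
  (hzK : Kcc c c' z)
  (hmin : forall w : 'cV[R]_C, Kcc c c' w ->
     2^-1 * norm2 z ^+ 2 <= 2^-1 * norm2 w ^+ 2) :
  norm2 z = 2^-1 * norm2 (mustar R c - mustar R c').
Proof.
set s := Num.sqrt (C%:R / (C%:R - 1) : R).
have hC1 : 0 < C%:R - 1 :> R.
  by rewrite subr_gt0 (_ : 1 = 1%:R) // ltr_nat.
have hC0 : 0 < C%:R :> R by rewrite ltr0n; case: C hC {c c' hcc z hzK hmin s hC1}.
have hs : 0 < s by rewrite sqrtr_gt0 divr_gt0.
have hs2 : 0 <= s by exact: ltW.
have hK := @KccE R C c c' _ hcc hs.
move/hK: hzK; rewrite -/s => hzK.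
pose w0 : 'cV[R]_C := \col_i (s / 2 * ((c' == i)%:R - (c == i)%:R)).
have hw0 : Kcc c c' w0.
  by apply/hK; rewrite !mxE eqxx (negbTE hcc) eq_sym (negbTE hcc) eqxx /= -/s; lra.
have := hmin _ hw0; rewrite !norm2E => hle.
have Ew0 : \sum_i (w0 i 0) ^+ 2 = s ^+ 2 / 2.
  rewrite (@split2 _ _ _ _ _ hcc) big1 ?addr0; last first.
    move=> i /andP [h1 h2]; rewrite !mxE.
    have -> : (c' == i) = false by rewrite eq_sym (negbTE h2).
    have -> : (c == i) = false by rewrite eq_sym (negbTE h1).
    by rewrite /= subrr mulr0 expr0n.
  rewrite !mxE eqxx eq_sym (negbTE hcc) eqxx /= -/s; by field.
have Lz : (z c 0) ^+ 2 + (z c' 0) ^+ 2 <= \sum_i (z i 0) ^+ 2.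
  rewrite (@split2 _ _ _ _ _ hcc) lerDl sumr_ge0 // => i _; exact: sqr_ge0.
have EN : \sum_i (z i 0) ^+ 2 = s ^+ 2 / 2.
  rewrite Ew0 in hle; apply/eqP; rewrite eq_le; apply/andP; split; first by lra.
  have h1 : s ^+ 2 <= (z c' 0 - z c 0) ^+ 2.
    by rewrite ler_pXn2r // ?nnegrE //; apply: le_trans hzK.
  have h2 : 0 <= (z c' 0 + z c 0) ^+ 2 by exact: sqr_ge0.
  nra.
have Emu : \sum_i ((mustar R c - mustar R c') i 0) ^+ 2 = 2 * s ^+ 2.
  rewrite (@split2 _ _ _ _ _ hcc) big1 ?addr0; last first.
    move=> i /andP [h1 h2]; rewrite !mxE.
    by rewrite (negbTE h1) (negbTE h2) /= subrr expr0n.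
  rewrite !mxE eqxx (negbTE hcc) eq_sym (negbTE hcc) eqxx /= -/s; ring.
apply/eqP; rewrite -(@eqrXn2 _ 2) //; last first.
- by apply: mulr_ge0; [rewrite invr_ge0 | exact: sqrtr_ge0].
- exact: sqrtr_ge0.
rewrite exprMn !norm2E EN Emu; apply/eqP; by field.
Qed.
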